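(* Let $K$ be a non-zero real constant. Let $J\subset(0,\infty)$ be an open interval and $u:J\to\mathbb{R}$ a smooth function with $u'(\alpha)\neq0$ on $J$. The rotational surface in $(\mathbb{R}^3,\|\cdot\|)$ given by $\bar f(\alpha,v)=(\alpha\cos v,\ \alpha\sin v,\ u(\alpha))$ has constant Minkowski Gaussian curvature $K$ if and only if there are a constant $c_1$ and a fixed sign such that $0<K\alpha^2+c_1<1$ for all $\alpha\in J$ and $$u'(\alpha)=\pm\frac{(K\alpha^2+c_1)^{\frac{2m-1}{2}}}{\left\{1-(K\alpha^2+c_1)^m\right\}^{\frac{2m-1}{2m}}}\qquad(\alpha\in J),$$ i.e. $u(\alpha)=\pm\int\frac{(K\alpha^2+c_1)^{\frac{2m-1}{2}}}{\{1-(K\alpha^2+c_1)^m\}^{\frac{2m-1}{2m}}}\,d\alpha$.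
   Context: Fix an integer $m\ge 2$. Let $\Phi(x_1,x_2,x_3)=(x_1^2+x_2^2)^m+x_3^{2m}$ and let $\|\cdot\|$ be the norm on $\mathbb{R}^3$ whose unit sphere is $S=\{x\in\mathbb{R}^3:\Phi(x)=1\}$ (a smooth, strictly convex surface). For a surface given by a parametrization $f(s,v)$, its Birkhoff–Gauss map $\eta$ is the map into $S$ defined by requiring $\eta\in S$ and $\nabla\Phi(\eta)=\mu\, f_s\times f_v$ for some function $\mu>0$, where $\times$ is the standard cross product (so the tangent plane of $S$ at $\eta(p)$ is parallel to $T_pM$, and $d\eta_p$ is an endomorphism of $T_pM$). The Minkowski Gaussian curvature is $K=\det(d\eta_p)$ (it does not depend on the choice of orientation). *)

(* Defs.v *)
From Stdlib Require Import Reals.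
From Coquelicot Require Import Coquelicot.
Open Scope R_scope.

Definition V3 : Type := (R * R * R)%type.
Definition c1 (x : V3) : R := fst (fst x).
Definition c2 (x : V3) : R := snd (fst x).
Definition c3 (x : V3) : R := snd x.
Definition mk3 (a b c : R) : V3 := (a, b, c).

Definition vadd (x y : V3) : V3 := mk3 (c1 x + c1 y) (c2 x + c2 y) (c3 x + c3 y).
Definition vscal (k : R) (x : V3) : V3 := mk3 (k * c1 x) (k * c2 x) (k * c3 x).
Definition cross (x y : V3) : V3 :=
  mk3 (c2 x * c3 y - c3 x * c2 y)
      (c3 x * c1 y - c1 x * c3 y)
      (c1 x * c2 y - c2 x * c1 y).

(** Phi(x) = (x1^2 + x2^2)^m + x3^(2m); the unit sphere S of the norm is {Phi = 1}. *)
Definition Phi (m : nat) (x : V3) : R :=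
  (c1 x ^ 2 + c2 x ^ 2) ^ m + c3 x ^ (2 * m).

Definition gradPhi (m : nat) (x : V3) : V3 :=
  mk3 (Derive (fun t => Phi m (mk3 t (c2 x) (c3 x))) (c1 x))
      (Derive (fun t => Phi m (mk3 (c1 x) t (c3 x))) (c2 x))
      (Derive (fun t => Phi m (mk3 (c1 x) (c2 x) t)) (c3 x)).

Definition pd_s (F : R -> R -> V3) (s v : R) : V3 :=
  mk3 (Derive (fun t => c1 (F t v)) s)
      (Derive (fun t => c2 (F t v)) s)
      (Derive (fun t => c3 (F t v)) s).
Definition pd_v (F : R -> R -> V3) (s v : R) : V3 :=
  mk3 (Derive (fun t => c1 (F s t)) v)
      (Derive (fun t => c2 (F s t)) v)
      (Derive (fun t => c3 (F s t)) v).

Definition ex_pd (F : R -> R -> V3) (s v : R) : Prop :=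
  ex_derive (fun t => c1 (F t v)) s /\ ex_derive (fun t => c2 (F t v)) s /\
  ex_derive (fun t => c3 (F t v)) s /\
  ex_derive (fun t => c1 (F s t)) v /\ ex_derive (fun t => c2 (F s t)) v /\
  ex_derive (fun t => c3 (F s t)) v.

Definition BirkhoffGaussMap (m : nat) (f eta : R -> R -> V3)
    (D : R -> R -> Prop) : Prop :=
  forall s v, D s v ->
    Phi m (eta s v) = 1 /\
    exists mu : R, 0 < mu /\
      gradPhi m (eta s v) = vscal mu (cross (pd_s f s v) (pd_v f s v)).

(** The Minkowski Gaussian curvature at p = (s,v) equals k: d eta_p, as an
    endomorphism of T_pM = span(f_s, f_v), has matrix [[a, c], [b, d]] in the
    basis (f_s, f_v), i.e. eta_s = a f_s + b f_v, eta_v = c f_s + d f_v, and its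
    determinant a d - b c is k. *)
Definition MinkGaussCurvAt (f eta : R -> R -> V3) (s v k : R) : Prop :=
  ex_pd eta s v /\
  exists a b c d : R,
    pd_s eta s v = vadd (vscal a (pd_s f s v)) (vscal b (pd_v f s v)) /\
    pd_v eta s v = vadd (vscal c (pd_s f s v)) (vscal d (pd_v f s v)) /\
    a * d - b * c = k.

(** The surface f (on parameter domain D) has constant Minkowski Gaussian
    curvature k: its Birkhoff-Gauss map exists and, for (any, hence the unique)
    Birkhoff-Gauss map eta, the curvature equals k at every point. *)
Definition ConstMinkGaussCurv (m : nat) (f : R -> R -> V3)
    (D : R -> R -> Prop) (k : R) : Prop :=
  (exists eta, BirkhoffGaussMap m f eta D) /\
  forall eta, BirkhoffGaussMap m f eta D ->
    forall s v, D s v -> MinkGaussCurvAt f eta s v k.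

Definition rotSurf (u : R -> R) (alpha v : R) : V3 :=
  mk3 (alpha * cos v) (alpha * sin v) (u alpha).

Definition inJ (a : R) (b : Rbar) (x : R) : Prop := a < x /\ Rbar_lt x b.

(* Main.v *)
Require Import Defs.
From Stdlib Require Import Reals Lra Lia Psatz.
From Coquelicot Require Import Coquelicot.
Import Defs.
Open Scope R_scope.
Lemma pow_lt_pos n x y : 0 <= x < y -> x^(S n) < y^(S n).
Proof.
intros [H0 H1]. induction n.
- simpl; lra.
- change (x * x^(S n) < y * y^(S n)).
  assert (0 <= x^(S n)) by (apply pow_le; lra). nra.
Qed.

Lemma pow_inj_pos n x y : 0 <= x -> 0 <= y -> x^(S n) = y^(S n) -> x = y.
Proof.
intros Hx Hy H. destruct (Rtotal_order x y) as [h|[h|h]]; auto.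
- pose proof (pow_lt_pos n x y); lra.
- pose proof (pow_lt_pos n y x); lra.
Qed.

Lemma pow_odd_opp j x : (-x)^(2*j+1) = - x^(2*j+1).
Proof.
rewrite !pow_add, !pow_mult. simpl. rewrite !Rmult_1_r.
replace (-x * -x) with (x*x) by ring. ring.
Qed.

Lemma pow_odd_pos j x : 0 < x -> 0 < x^(2*j+1).
Proof. intros; apply pow_lt; auto. Qed.

Lemma pow_odd_lt j x y : x < y -> x^(2*j+1) < y^(2*j+1).
Proof.
intros H. replace (2*j+1)%nat with (S (2*j)) by lia.
destruct (Rle_lt_dec 0 x).
- apply pow_lt_pos; lra.
- destruct (Rle_lt_dec y 0).
  + pose proof (pow_lt_pos (2*j) (-y) (-x) ltac:(lra)).
    replace (S (2*j)) with (2*j+1)%nat in * by lia.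
    rewrite !pow_odd_opp in H0. lra.
  + pose proof (pow_lt_pos (2*j) 0 y ltac:(lra)).
    pose proof (pow_lt_pos (2*j) 0 (-x) ltac:(lra)).
    replace (S (2*j)) with (2*j+1)%nat in * by lia.
    rewrite pow_odd_opp in H1. rewrite pow_i in * by lia. lra.
Qed.

Lemma pow_odd_inj j x y : x^(2*j+1) = y^(2*j+1) -> x = y.
Proof.
intros H. destruct (Rtotal_order x y) as [h|[h|h]]; auto.
- pose proof (pow_odd_lt j x y h); lra.
- pose proof (pow_odd_lt j y x h); lra.
Qed.

Lemma pow_odd_pos_inv j x : 0 < x^(2*j+1) -> 0 < x.
Proof.
intros H. destruct (Rle_lt_dec x 0); auto.
destruct (Req_dec x 0). subst. rewrite pow_i in H by lia. lra.
pose proof (pow_odd_lt j x 0 ltac:(lra)). replace (0^(2*j+1)) with 0 in H1 by (rewrite pow_add; simpl; ring). lra.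
Qed.
Lemma gradPhi_eq m x : (1<=m)%nat -> gradPhi m x = mk3 (2*INR m * (c1 x^2+c2 x^2)^(m-1) * c1 x) (2*INR m * (c1 x^2+c2 x^2)^(m-1) * c2 x) (2*INR m * c3 x^(2*m-1)).
Proof.
intros Hm. unfold gradPhi, Phi, mk3, c1, c2, c3; simpl.
f_equal; [f_equal|]; apply is_derive_unique; auto_derive; auto.
all: rewrite ?Nat.sub_1_r, ?plus_INR; simpl; ring.
Qed.

Lemma pow_2m m x : (1<=m)%nat -> x^(2*m) = x^(2*m-1) * x.
Proof. intros. set (n := (2*m-1)%nat). assert (E : (2*m = S n)%nat) by (unfold n; lia). rewrite E. simpl; ring. Qed.

Lemma pow_2m1 m x : (1<=m)%nat -> x^(2*m-1) = x * (x^2)^(m-1).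
Proof. intros. replace (2*m-1)%nat with (S (2*(m-1))) by lia. change (x^(S (2*(m-1)))) with (x * x^(2*(m-1))). rewrite pow_mult. ring. Qed.

Lemma bgm_point m x cv sv p al mu : (1<=m)%nat -> cv^2+sv^2=1 -> p<>0 -> 0<al -> 0<mu ->
  Phi m x = 1 -> gradPhi m x = vscal mu (mk3 (-(al*p*cv)) (-(al*p*sv)) al) ->
  exists r z, x = mk3 (r*cv) (r*sv) z /\ 0<z /\ r^(2*m)+z^(2*m)=1 /\ r^(2*m-1) = -p*z^(2*m-1).
Proof.
intros Hm Hcs Hp Hal Hmu HPhi HG.
rewrite gradPhi_eq in HG by auto.
pose proof (f_equal c1 HG) as E1. pose proof (f_equal c2 HG) as E2. pose proof (f_equal c3 HG) as E3. clear HG.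
destruct x as [[x1 x2] x3]. unfold Phi, vscal, mk3, c1, c2, c3 in *; cbn [fst snd] in *.
set (s := x1^2+x2^2) in *.
assert (Hs : 0 < s).
{ assert (0 <= s) by (unfold s; nra).
  destruct (Req_dec s 0) as [h|h]; [|lra].
  assert (x1 = 0) by (unfold s in h; nra). assert (x2 = 0) by (unfold s in h; nra).
  rewrite H0 in E1. rewrite H1 in E2. rewrite Rmult_0_r in E1, E2.
  assert (mu*al*p*(cv^2+sv^2) = 0).
  { replace (mu*al*p*(cv^2+sv^2)) with (-(cv*(mu * -(al*p*cv))) - sv*(mu * -(al*p*sv))) by ring.
    rewrite <- E1, <- E2; ring. }
  replace (cv^2+sv^2) with 1 in H2 by (simpl; lra). assert (mu*al <> 0) by (apply Rgt_not_eq; nra).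
  exfalso; apply Hp; apply Rmult_eq_reg_l with (mu*al); auto; lra. }
assert (Hk : 0 < s^(m-1)) by (apply pow_lt; auto).
assert (HmR : 0 < INR m) by (apply lt_0_INR; lia).
set (t := -(mu*al*p)/(2*INR m * s^(m-1))).
assert (Ex1 : x1 = t*cv) by (unfold t; apply Rmult_eq_reg_l with (2*INR m*s^(m-1)); [rewrite E1; field; split; lra|nra]).
assert (Ex2 : x2 = t*sv) by (unfold t; apply Rmult_eq_reg_l with (2*INR m*s^(m-1)); [rewrite E2; field; split; lra|nra]).
assert (Est : s = t^2) by (unfold s; rewrite Ex1, Ex2; nra).
exists t, x3.
assert (Hz : 0 < x3).
{ replace (2*m-1)%nat with (2*(m-1)+1)%nat in E3 by lia.
  apply (pow_odd_pos_inv (m-1)). nra. }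
split; [rewrite Ex1, Ex2; reflexivity|]. split; auto. split.
- rewrite <- HPhi. fold s. rewrite Est, <- pow_mult. reflexivity.
- rewrite pow_2m1 by auto. rewrite <- Est.
  replace (t*s^(m-1)) with (-(mu*al*p)/(2*INR m)) by (unfold t; field; lra).
  replace (x3^(2*m-1)) with (mu*al/(2*INR m)) by (rewrite <- E3; field; lra).
  field; lra.
Qed.

Lemma rz_uniq m p r z r' z' : (1<=m)%nat -> 0<z -> 0<z' ->
  r^(2*m)+z^(2*m)=1 -> r'^(2*m)+z'^(2*m)=1 ->
  r^(2*m-1) = -p*z^(2*m-1) -> r'^(2*m-1) = -p*z'^(2*m-1) -> r=r' /\ z=z'.
Proof.
intros Hm Hz Hz' H1 H1' H2 H2'.
set (k := r/z). set (k' := r'/z').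
assert (Er : r = k*z) by (unfold k; field; lra).
assert (Er' : r' = k'*z') by (unfold k'; field; lra).
assert (Hzp : 0 < z^(2*m-1)) by (apply pow_lt; lra).
assert (Hzp' : 0 < z'^(2*m-1)) by (apply pow_lt; lra).
assert (Hk : k^(2*m-1) = -p).
{ rewrite Er, Rpow_mult_distr in H2. apply Rmult_eq_reg_r with (z^(2*m-1)); lra. }
assert (Hk' : k'^(2*m-1) = -p).
{ rewrite Er', Rpow_mult_distr in H2'. apply Rmult_eq_reg_r with (z'^(2*m-1)); lra. }
assert (Ekk : k = k').
{ apply (pow_odd_inj (m-1)). replace (2*(m-1)+1)%nat with (2*m-1)%nat by lia. congruence. }
rewrite <- Ekk in Er'.
rewrite Er, Rpow_mult_distr in H1. rewrite Er', Rpow_mult_distr in H1'.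
assert (Hk2 : 0 <= k^(2*m)) by (rewrite pow_mult; apply pow_le; nra).
assert (Ez : z^(2*m) = z'^(2*m)).
{ apply Rmult_eq_reg_l with (k^(2*m)+1); [|lra]. nra. }
assert (E2m : (2*m = S (2*m-1))%nat) by lia. rewrite E2m in Ez.
apply pow_inj_pos in Ez; try lra. split; congruence.
Qed.

Lemma ex_derive_cpt f x : ex_derive f x -> continuity_pt f x.
Proof. intros H. apply continuity_pt_filterlim. apply (ex_derive_continuous f x H). Qed.

Lemma locally_R x (P:R->Prop) e : 0<e -> (forall y, Rabs (y-x) < e -> P y) -> locally x P.
Proof. intros He H. exists (mkposreal e He). intros y Hy. apply H. exact Hy. Qed.

Lemma inJ_locally a b x : inJ a b x -> locally x (inJ a b).
Proof.
unfold inJ; destruct b as [b'| |]; simpl; intros [H1 H2].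
- apply locally_R with (Rmin (x-a) (b'-x)). apply Rmin_glb_lt; lra.
  intros y Hy. apply Rabs_def2 in Hy. pose proof (Rmin_l (x-a) (b'-x)). pose proof (Rmin_r (x-a) (b'-x)). lra.
- apply locally_R with (x-a). lra. intros y Hy. apply Rabs_def2 in Hy. lra.
- contradiction.
Qed.

Lemma inJ_conv a b x y t : inJ a b x -> inJ a b y -> Rmin x y <= t <= Rmax x y -> inJ a b t.
Proof.
unfold inJ, Rmin, Rmax; destruct b as [b'| |]; simpl; destruct (Rle_dec x y); intros; lra.
Qed.

Lemma const_on_J a b g : (forall x, inJ a b x -> is_derive g x 0) ->
  forall x y, inJ a b x -> inJ a b y -> g x = g y.
Proof.
intros Hd x y Hx Hy.
destruct (MVT_gen g x y (fun _ => 0)) as [c [_ Hc]].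
- intros t Ht. apply Hd. apply (inJ_conv a b x y); auto; lra.
- intros t Ht. apply ex_derive_cpt. eexists. apply Hd. apply (inJ_conv a b x y); auto.
- lra.
Qed.

Lemma pd_s_rot u al v : pd_s (rotSurf u) al v = mk3 (cos v) (sin v) (Derive u al).
Proof.
unfold pd_s, rotSurf, mk3, c1, c2, c3; cbn [fst snd].
f_equal; try f_equal; try reflexivity; apply is_derive_unique; auto_derive; auto; ring.
Qed.

Lemma pd_v_rot u al v : pd_v (rotSurf u) al v = mk3 (-(al*sin v)) (al*cos v) 0.
Proof.
unfold pd_v, rotSurf, mk3, c1, c2, c3; cbn [fst snd].
f_equal; try f_equal; apply is_derive_unique; auto_derive; auto; ring.
Qed.

Lemma cross_rot u al v : cross (pd_s (rotSurf u) al v) (pd_v (rotSurf u) al v) =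
  mk3 (-(al*Derive u al*cos v)) (-(al*Derive u al*sin v)) al.
Proof.
rewrite pd_s_rot, pd_v_rot. unfold cross, mk3, c1, c2, c3; cbn [fst snd].
pose proof (sin2_cos2 v). unfold Rsqr in H.
f_equal; try f_equal; try ring.
transitivity (al*(sin v*sin v + cos v*cos v)); [ring| rewrite H; ring].
Qed.

Lemma bgm_form m u a b eta : (1<=m)%nat -> 0<=a -> (forall x, inJ a b x -> Derive u x <> 0) ->
  BirkhoffGaussMap m (rotSurf u) eta (fun al _ => inJ a b al) ->
  forall al, inJ a b al ->
  (forall v, eta al v = mk3 (c1 (eta al 0) * cos v) (c1 (eta al 0) * sin v) (c3 (eta al 0))) /\
  0 < c3 (eta al 0) /\ c1 (eta al 0)^(2*m) + c3 (eta al 0)^(2*m) = 1 /\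
  c1 (eta al 0)^(2*m-1) = - Derive u al * c3 (eta al 0)^(2*m-1).
Proof.
intros Hm Ha Hu HB al Hal.
assert (Hal0 : 0 < al) by (destruct Hal; lra).
assert (Hp: forall v, exists r z, eta al v = mk3 (r*cos v) (r*sin v) z /\ 0<z /\
   r^(2*m)+z^(2*m)=1 /\ r^(2*m-1) = -Derive u al * z^(2*m-1)).
{ intros v. destruct (HB al v Hal) as [HPhi [mu [Hmu HG]]]. rewrite cross_rot in HG.
  apply bgm_point with (mu:=mu) (al:=al); auto.
  pose proof (sin2_cos2 v). unfold Rsqr in H. simpl. lra. }
destruct (Hp 0) as [r0 [z0 [E0 [Hz0 [H10 H20]]]]]. rewrite cos_0, sin_0 in E0.
rewrite E0. unfold c1, c3, mk3; cbn [fst snd]. rewrite Rmult_1_r.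
split; [|auto].
intros v. destruct (Hp v) as [r [z [E [Hz [H1 H2]]]]].
destruct (rz_uniq m (Derive u al) r z r0 z0) as [-> ->]; auto.
Qed.

Lemma curv_forward m u a b eta K : (1<=m)%nat -> 0<=a -> (forall x, inJ a b x -> Derive u x <> 0) ->
  BirkhoffGaussMap m (rotSurf u) eta (fun al _ => inJ a b al) ->
  (forall al v, inJ a b al -> MinkGaussCurvAt (rotSurf u) eta al v K) ->
  forall al, inJ a b al -> ex_derive (fun t => c1 (eta t 0)) al /\
    c1 (eta al 0) * Derive (fun t => c1 (eta t 0)) al = K * al.
Proof.
intros Hm Ha Hu HB HC al Hal.
destruct (HC al 0 Hal) as [Hex [A [B [C [D [E1 [E2 E3]]]]]]].
split; [apply Hex|].
destruct (bgm_form m u a b eta Hm Ha Hu HB al Hal) as [Hf _].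
set (r := c1 (eta al 0)) in *.
rewrite pd_s_rot in E1. rewrite pd_v_rot in E1, E2. rewrite pd_s_rot in E2.
rewrite cos_0, sin_0 in E1, E2.
pose proof (f_equal c1 E1) as E11. pose proof (f_equal c2 E1) as E12.
pose proof (f_equal c1 E2) as E21. pose proof (f_equal c2 E2) as E22.
unfold pd_s, pd_v, vadd, vscal, mk3, c1, c2, c3 in E11, E12, E21, E22. cbn [fst snd] in E11, E12, E21, E22.
assert (D2 : Derive (fun t => c2 (eta t 0)) al = 0).
{ rewrite (Derive_ext_loc _ (fun _ => 0)). apply Derive_const.
  generalize (inJ_locally a b al Hal). apply filter_imp. intros t Ht.
  destruct (bgm_form m u a b eta Hm Ha Hu HB t Ht) as [Hft _].
  rewrite (Hft 0). unfold c2, mk3; cbn [fst snd]. rewrite sin_0; ring. }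
assert (V1 : Derive (fun t => c1 (eta al t)) 0 = 0).
{ rewrite (Derive_ext _ (fun t => r * cos t)). apply is_derive_unique; auto_derive; auto.
  rewrite sin_0; ring. intros t; rewrite (Hf t); reflexivity. }
assert (V2 : Derive (fun t => c2 (eta al t)) 0 = r).
{ rewrite (Derive_ext _ (fun t => r * sin t)). apply is_derive_unique; auto_derive; auto.
  rewrite cos_0; ring. intros t; rewrite (Hf t); reflexivity. }
assert (Hal0 : 0 < al) by (destruct Hal; lra).
change (Derive (fun t => c1 (eta t 0)) al = A * 1 + B * - (al * 0)) in E11.
change (Derive (fun t => c2 (eta t 0)) al = A * 0 + B * (al * 1)) in E12.
change (Derive (fun t => c1 (eta al t)) 0 = C * 1 + D * - (al * 0)) in E21.
change (Derive (fun t => c2 (eta al t)) 0 = C * 0 + D * (al * 1)) in E22.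
rewrite D2 in E12. rewrite V1 in E21. rewrite V2 in E22.
assert (B = 0) by nra. assert (C = 0) by nra. subst B C.
rewrite <- E3. nra.
Qed.

Lemma INR_2m1 m : (1<=m)%nat -> INR (2*m-1) = 2*INR m - 1.
Proof. intros. rewrite minus_INR by lia. rewrite mult_INR. simpl. ring. Qed.

Lemma INR_2m m : INR (2*m) = 2*INR m.
Proof. rewrite mult_INR. simpl. ring. Qed.

Lemma Rpower_pow_mult x k y : 0 < x -> Rpower (x^k) y = Rpower x (INR k * y).
Proof. intros. rewrite <- Rpower_pow by auto. apply Rpower_mult. Qed.

Lemma Rpow_w m r : (1<=m)%nat -> r <> 0 ->
  Rpower (r^2) ((2*INR m - 1)/2) = Rabs r ^ (2*m-1).
Proof.
intros Hm Hr. rewrite <- pow2_abs.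
assert (0 < Rabs r) by (apply Rabs_pos_lt; auto).
rewrite Rpower_pow_mult by auto.
replace (INR 2 * ((2 * INR m - 1) / 2)) with (INR (2*m-1)) by (rewrite INR_2m1 by auto; simpl; field).
apply Rpower_pow; auto.
Qed.

Lemma Rpow_z m z : (1<=m)%nat -> 0 < z ->
  Rpower (z^(2*m)) ((2*INR m - 1)/(2*INR m)) = z ^ (2*m-1).
Proof.
intros Hm Hz. rewrite Rpower_pow_mult by auto.
assert (0 < INR m) by (apply lt_0_INR; lia).
replace (INR (2*m) * ((2 * INR m - 1) / (2*INR m))) with (INR (2*m-1)) by (rewrite INR_2m1, INR_2m by auto; field; lra).
apply Rpower_pow; auto.
Qed.

Lemma J_inhab (a : R) (b : Rbar) : Rbar_lt a b -> exists x, inJ a b x.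
Proof.
unfold inJ; destruct b as [b'| |]; simpl; intros H.
- exists ((a+b')/2); simpl; split; lra.
- exists (a+1); simpl; split; lra.
- contradiction.
Qed.

Lemma no_sign_change (a : R) (b : Rbar) (f : R -> R) : (forall x, inJ a b x -> ex_derive f x) ->
  (forall x, inJ a b x -> f x <> 0) -> forall x y, inJ a b x -> inJ a b y -> f x < 0 -> 0 < f y -> False.
Proof.
intros Hd Hn x y Hx Hy Hfx Hfy.
destruct (Rtotal_order x y) as [h|[h|h]].
- destruct (Ranalysis5.IVT_interv f x y) as [z [Hz Hfz]]; auto.
  + intros t Ht. apply ex_derive_cpt, Hd. apply (inJ_conv a b x y); auto.
    unfold Rmin, Rmax; destruct Rle_dec; lra.
  + apply (Hn z); auto. apply (inJ_conv a b x y); auto. unfold Rmin, Rmax; destruct Rle_dec; lra.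
- subst; lra.
- destruct (Ranalysis5.IVT_interv (fun t => - f t) y x) as [z [Hz Hfz]]; auto.
  + intros t Ht. apply (continuity_pt_opp f). apply ex_derive_cpt. apply Hd. apply (inJ_conv a b x y); auto.
    unfold Rmin, Rmax; destruct Rle_dec; lra.
  + lra.
  + lra.
  + apply (Hn z); [|lra]. apply (inJ_conv a b x y); auto. unfold Rmin, Rmax; destruct Rle_dec; lra.
Qed.

Lemma pow_odd_opp' m x : (1<=m)%nat -> (-x)^(2*m-1) = - x^(2*m-1).
Proof. intros. replace (2*m-1)%nat with (2*(m-1)+1)%nat by lia. apply pow_odd_opp. Qed.

Lemma formula_from_rz m p r z : (1<=m)%nat -> 0 < z -> r <> 0 ->
  r^(2*m)+z^(2*m)=1 -> r^(2*m-1) = -p*z^(2*m-1) ->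
  p = (if Rlt_dec 0 r then -1 else 1) * Rpower (r^2) ((2*INR m - 1)/2)
       / Rpower (1 - (r^2)^m) ((2*INR m - 1)/(2*INR m)).
Proof.
intros Hm Hz Hr H1 H2.
rewrite Rpow_w by auto.
replace (1 - (r^2)^m) with (z^(2*m)) by (rewrite <- pow_mult; lra).
rewrite Rpow_z by auto.
assert (Hzp : 0 < z^(2*m-1)) by (apply pow_lt; auto).
destruct (Rlt_dec 0 r).
- rewrite Rabs_pos_eq by lra. rewrite H2. field. lra.
- rewrite Rabs_left by lra. rewrite pow_odd_opp' by auto. rewrite H2. field. lra.
Qed.

Lemma forward (m : nat) (hm : (2 <= m)%nat) (K : R)
  (a : R) (b : Rbar) (ha : 0 <= a) (hab : Rbar_lt a b)
  (u : R -> R)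
  (hu' : forall x, inJ a b x -> Derive u x <> 0) :
  ConstMinkGaussCurv m (rotSurf u) (fun alpha _ => inJ a b alpha) K ->
  exists c1 : R,
    (forall alpha, inJ a b alpha -> 0 < K * alpha ^ 2 + c1 < 1) /\
    exists eps : R, (eps = 1 \/ eps = -1) /\
      forall alpha, inJ a b alpha ->
        Derive u alpha =
          eps * Rpower (K * alpha ^ 2 + c1) ((2 * INR m - 1) / 2)
            / Rpower (1 - (K * alpha ^ 2 + c1) ^ m)
                     ((2 * INR m - 1) / (2 * INR m)).
Proof.
intros [[eta HB] HC].
assert (Hm : (1 <= m)%nat) by lia.
assert (HM := fun al v Hal => HC eta HB al v Hal).
pose proof (curv_forward m u a b eta K Hm ha hu' HB HM) as Hfw.
pose proof (bgm_form m u a b eta Hm ha hu' HB) as Hform.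
set (Rf := fun t => c1 (eta t 0)) in *.
set (Zf := fun t => c3 (eta t 0)) in *.
assert (Hnz : forall t, inJ a b t -> Rf t <> 0).
{ intros t Ht Heq. destruct (Hform t Ht) as [_ [Hz [_ H2]]].
  fold (Rf t) (Zf t) in H2, Hz. rewrite Heq in H2. rewrite pow_i in H2 by lia.
  assert (0 < Zf t ^(2*m-1)) by (apply pow_lt; auto).
  apply (hu' t Ht). nra. }
destruct (J_inhab a b hab) as [a0 Ha0].
set (c := Rf a0^2 - K*a0^2).
assert (Hw : forall t, inJ a b t -> Rf t ^2 = K*t^2 + c).
{ intros t Ht.
  assert (Hc : forall x y, inJ a b x -> inJ a b y -> Rf x^2 - K*x^2 = Rf y^2 - K*y^2).
  { apply (const_on_J a b (fun t => Rf t^2 - K*t^2)).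
    intros x Hx. destruct (Hfw x Hx) as [Hex HD].
    auto_derive; auto. fold (Rf x) in HD |- *. simpl. change (Derive (fun x0 => Rf x0) x) with (Derive Rf x). change (c1 (eta x 0)) with (Rf x) in HD. nra. }
  unfold c. rewrite <- (Hc t a0 Ht Ha0). ring. }
exists c. split.
- intros t Ht. rewrite <- Hw by auto. pose proof (Hnz t Ht).
  split. simpl; nra.
  destruct (Hform t Ht) as [_ [Hz [H1 _]]]. fold (Rf t) (Zf t) in H1, Hz.
  assert (0 < Zf t ^(2*m)) by (apply pow_lt; auto).
  rewrite pow_mult in H1.
  destruct (Rlt_or_le (Rf t^2) 1); auto.
  pose proof (pow_R1_Rle (Rf t^2) m H2). lra.
- exists (if Rlt_dec 0 (Rf a0) then -1 else 1). split.
  { destruct Rlt_dec; auto. }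
  intros t Ht. rewrite <- Hw by auto.
  destruct (Hform t Ht) as [_ [Hz [H1 H2]]]. fold (Rf t) (Zf t) in H1, H2, Hz.
  rewrite (formula_from_rz m (Derive u t) (Rf t) (Zf t)); auto.
  assert (Hex : forall x, inJ a b x -> ex_derive Rf x) by (intros x Hx; apply Hfw; auto).
  destruct (Rlt_dec 0 (Rf t)), (Rlt_dec 0 (Rf a0)); auto; exfalso.
  + apply (no_sign_change a b Rf Hex Hnz a0 t); auto. pose proof (Hnz a0 Ha0); lra.
  + apply (no_sign_change a b Rf Hex Hnz t a0); auto. pose proof (Hnz t Ht); lra.
Qed.

Definition Rr (eps K c t : R) : R := -eps * sqrt (K*t^2+c).
Definition Zz (m : nat) (K c t : R) : R := Rpower (1 - (K*t^2+c)^m) (/(2*INR m)).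

Lemma Zz_pos m K c t : 0 < Zz m K c t.
Proof. unfold Zz, Rpower. apply exp_pos. Qed.

Lemma Zz_pow m K c t : (1<=m)%nat -> 0 < K*t^2+c < 1 -> Zz m K c t ^ (2*m) = 1 - (K*t^2+c)^m.
Proof.
intros Hm Hw. assert (0 <= (K*t^2+c)^m < 1) by (apply pow_lt_1_compat; lia || lra).
unfold Zz. rewrite <- Rpower_pow by (unfold Rpower; apply exp_pos).
rewrite Rpower_mult. rewrite INR_2m.
assert (0 < INR m) by (apply lt_0_INR; lia).
replace (/ (2 * INR m) * (2 * INR m)) with 1 by (field; lra).
apply Rpower_1. lra.
Qed.

Lemma Rr_pow2 eps K c t : (eps = 1 \/ eps = -1) -> 0 < K*t^2+c -> Rr eps K c t ^2 = K*t^2+c.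
Proof.
intros He Hw. unfold Rr. rewrite Rpow_mult_distr, pow2_sqrt by lra. destruct He; subst; simpl; ring.
Qed.

Lemma rz_explicit m K c eps p t : (1<=m)%nat -> (eps = 1 \/ eps = -1) -> 0 < K*t^2+c < 1 ->
  p = eps * Rpower (K * t ^ 2 + c) ((2 * INR m - 1) / 2)
            / Rpower (1 - (K * t ^ 2 + c) ^ m) ((2 * INR m - 1) / (2 * INR m)) ->
  0 < Zz m K c t /\ Rr eps K c t^(2*m) + Zz m K c t^(2*m) = 1 /\
  Rr eps K c t^(2*m-1) = - p * Zz m K c t^(2*m-1).
Proof.
intros Hm He Hw Hp. split; [apply Zz_pos|]. split.
- rewrite Zz_pow by auto. rewrite pow_mult, Rr_pow2 by (auto; lra). ring.
- assert (Hs : 0 < sqrt (K*t^2+c)) by (apply sqrt_lt_R0; lra).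
  rewrite <- (pow2_sqrt (K*t^2+c)) in Hp at 1 by lra.
  rewrite Rpow_w in Hp by (auto; lra).
  rewrite <- Zz_pow in Hp by auto. rewrite Rpow_z in Hp by (auto; apply Zz_pos).
  rewrite Rabs_pos_eq in Hp by lra.
  assert (0 < Zz m K c t ^ (2*m-1)) by (apply pow_lt, Zz_pos).
  rewrite Hp. destruct He; subst.
  + replace (Rr 1 K c t) with (- sqrt (K*t^2+c)) by (unfold Rr; ring). rewrite pow_odd_opp' by auto. field. lra.
  + replace (Rr (-1) K c t) with (sqrt (K*t^2+c)) by (unfold Rr; ring). field. lra.
Qed.

Lemma bgm_pt_of m u al v r z : (1<=m)%nat -> 0<al -> 0<z -> r^(2*m)+z^(2*m)=1 ->
  r^(2*m-1) = -Derive u al * z^(2*m-1) ->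
  Phi m (mk3 (r*cos v) (r*sin v) z) = 1 /\ exists mu, 0<mu /\
  gradPhi m (mk3 (r*cos v) (r*sin v) z) = vscal mu (cross (pd_s (rotSurf u) al v) (pd_v (rotSurf u) al v)).
Proof.
intros Hm Hal Hz H1 H2.
assert (Hs : (r*cos v)^2 + (r*sin v)^2 = r^2).
{ pose proof (sin2_cos2 v). unfold Rsqr in H. simpl. transitivity (r*r*(sin v*sin v+cos v*cos v)); [ring|rewrite H; ring]. }
split.
- unfold Phi, mk3, c1, c2, c3; cbn [fst snd]. rewrite Hs, <- pow_mult. exact H1.
- rewrite gradPhi_eq by auto. rewrite cross_rot.
  assert (HmR : 0 < INR m) by (apply lt_0_INR; lia).
  assert (Hzp : 0 < z^(2*m-1)) by (apply pow_lt; auto).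
  exists (2*INR m * z^(2*m-1) / al). split.
  + apply Rdiv_lt_0_compat; nra.
  + unfold vscal, mk3, c1, c2, c3; cbn [fst snd]. rewrite Hs.
    assert (E : (r^2)^(m-1) * r = -Derive u al * z^(2*m-1)) by (rewrite <- H2, (pow_2m1 m r Hm); ring).
    apply (f_equal2 pair); [apply (f_equal2 pair)|].
    * transitivity (2*INR m * ((r^2)^(m-1) * r) * cos v); [ring|]. rewrite E. field. lra.
    * transitivity (2*INR m * ((r^2)^(m-1) * r) * sin v); [ring|]. rewrite E. field. lra.
    * field. lra.
Qed.

Ltac fixd := repeat match goal with |- context [Derive (fun x => ?f x) ?y] =>
  change (Derive (fun x => f x) y) with (Derive f y) end.

Lemma curv_back u a b eta (Rf Zf : R -> R) K m al v : (1<=m)%nat -> inJ a b al -> 0 < al ->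
  (forall t, inJ a b t -> forall v, eta t v = mk3 (Rf t * cos v) (Rf t * sin v) (Zf t)) ->
  (forall t, inJ a b t -> Rf t^(2*m) + Zf t^(2*m) = 1) ->
  Rf al^(2*m-1) = -Derive u al * Zf al^(2*m-1) -> 0 < Zf al ->
  ex_derive Rf al -> ex_derive Zf al -> Rf al * Derive Rf al = K * al ->
  MinkGaussCurvAt (rotSurf u) eta al v K.
Proof.
intros Hm Hal Hal0 Hf H1 H2 Hz HR HZ HK.
pose proof (inJ_locally a b al Hal) as L.
assert (S1 : is_derive (fun t => c1 (eta t v)) al (Derive Rf al * cos v)).
{ apply (is_derive_ext_loc (fun t => Rf t * cos v)).
  - generalize L; apply filter_imp; intros t Ht; rewrite (Hf t Ht v); reflexivity.
  - auto_derive; auto. fixd. ring. }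
assert (S2 : is_derive (fun t => c2 (eta t v)) al (Derive Rf al * sin v)).
{ apply (is_derive_ext_loc (fun t => Rf t * sin v)).
  - generalize L; apply filter_imp; intros t Ht; rewrite (Hf t Ht v); reflexivity.
  - auto_derive; auto. fixd. ring. }
assert (S3 : is_derive (fun t => c3 (eta t v)) al (Derive Zf al)).
{ apply (is_derive_ext_loc Zf).
  - generalize L; apply filter_imp; intros t Ht; rewrite (Hf t Ht v); reflexivity.
  - apply Derive_correct; auto. }
assert (V1 : is_derive (fun t => c1 (eta al t)) v (-(Rf al * sin v))).
{ apply (is_derive_ext (fun t => Rf al * cos t)).
  - intros t; rewrite (Hf al Hal t); reflexivity.
  - auto_derive; auto. ring. }
assert (V2 : is_derive (fun t => c2 (eta al t)) v (Rf al * cos v)).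
{ apply (is_derive_ext (fun t => Rf al * sin t)).
  - intros t; rewrite (Hf al Hal t); reflexivity.
  - auto_derive; auto. ring. }
assert (V3 : is_derive (fun t => c3 (eta al t)) v 0).
{ apply (is_derive_ext (fun t => Zf al)).
  - intros t; rewrite (Hf al Hal t); reflexivity.
  - auto_derive; auto. }
assert (Imp : Derive Zf al = Derive u al * Derive Rf al).
{ assert (I0 : is_derive (fun t => Rf t^(2*m) + Zf t^(2*m)) al 0).
  { apply (is_derive_ext_loc (fun _ => 1)).
    - generalize L; apply filter_imp; intros t Ht; rewrite (H1 t Ht); reflexivity.
    - auto_derive; auto. }
  assert (I1 : is_derive (fun t => Rf t^(2*m) + Zf t^(2*m)) al
     (INR (2*m) * Rf al^(2*m-1) * Derive Rf al + INR (2*m) * Zf al^(2*m-1) * Derive Zf al)).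
  { auto_derive; auto. fixd. replace (m+(m+0))%nat with (2*m)%nat by lia. rewrite <- !Nat.sub_1_r. ring. }
  pose proof (is_derive_unique _ _ _ I0) as U0. pose proof (is_derive_unique _ _ _ I1) as U1.
  rewrite U0 in U1. rewrite H2, INR_2m in U1.
  assert (0 < INR m) by (apply lt_0_INR; lia).
  assert (0 < Zf al^(2*m-1)) by (apply pow_lt; auto).
  apply Rmult_eq_reg_l with (2*INR m * Zf al^(2*m-1)); [|nra]. nra. }
split.
- repeat split; eexists; eauto.
- exists (Derive Rf al), 0, 0, (Rf al / al).
  rewrite pd_s_rot, pd_v_rot.
  assert (D1 : Derive (fun t => c1 (eta t v)) al = Derive Rf al * cos v) by (apply is_derive_unique; exact S1).
  assert (D2 : Derive (fun t => c2 (eta t v)) al = Derive Rf al * sin v) by (apply is_derive_unique; exact S2).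
  assert (D3 : Derive (fun t => c3 (eta t v)) al = Derive Zf al) by (apply is_derive_unique; exact S3).
  assert (W1 : Derive (fun t => c1 (eta al t)) v = -(Rf al * sin v)) by (apply is_derive_unique; exact V1).
  assert (W2 : Derive (fun t => c2 (eta al t)) v = Rf al * cos v) by (apply is_derive_unique; exact V2).
  assert (W3 : Derive (fun t => c3 (eta al t)) v = 0) by (apply is_derive_unique; exact V3).
  unfold pd_s, pd_v. rewrite D1, D2, D3, W1, W2, W3.
  unfold vadd, vscal, mk3, c1, c2, c3; cbn [fst snd].
  split; [|split].
  + rewrite Imp. apply (f_equal2 pair); [apply (f_equal2 pair)|]; ring.
  + apply (f_equal2 pair); [apply (f_equal2 pair)|]; field; lra.
  + replace (Derive Rf al * (Rf al / al) - 0 * 0) with (Rf al * Derive Rf al / al) by (field; lra).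
    rewrite HK. field. lra.
Qed.

Lemma Rr_is_derive eps K c t : 0 < K*t^2+c ->
  is_derive (Rr eps K c) t (-eps * (K*t / sqrt (K*t^2+c))).
Proof.
intros Hw. assert (0 < sqrt (K*t^2+c)) by (apply sqrt_lt_R0; lra).
unfold Rr. auto_derive. lra. replace (K*(t*(t*1))+c) with (K*t^2+c) by ring. field. lra.
Qed.

Lemma Zz_ex_derive m K c t : (1<=m)%nat -> 0 < K*t^2+c < 1 -> ex_derive (Zz m K c) t.
Proof.
intros Hm Hw. assert (0 <= (K*t^2+c)^m < 1) by (apply pow_lt_1_compat; lia || lra).
unfold Zz, Rpower. auto_derive. replace (K*(t*(t*1))+c) with (K*t^2+c) by ring. lra.
Qed.

Lemma backward (m : nat) (hm : (2 <= m)%nat) (K : R)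
  (a : R) (b : Rbar) (ha : 0 <= a)
  (u : R -> R)
  (hu' : forall x, inJ a b x -> Derive u x <> 0) :
  (exists c1 : R,
    (forall alpha, inJ a b alpha -> 0 < K * alpha ^ 2 + c1 < 1) /\
    exists eps : R, (eps = 1 \/ eps = -1) /\
      forall alpha, inJ a b alpha ->
        Derive u alpha =
          eps * Rpower (K * alpha ^ 2 + c1) ((2 * INR m - 1) / 2)
            / Rpower (1 - (K * alpha ^ 2 + c1) ^ m)
                     ((2 * INR m - 1) / (2 * INR m))) ->
  ConstMinkGaussCurv m (rotSurf u) (fun alpha _ => inJ a b alpha) K.
Proof.
intros [c [Hrange [eps [Heps Hder]]]].
assert (Hm : (1 <= m)%nat) by lia.
set (Rf := Rr eps K c). set (Zf := Zz m K c).
assert (HRZ : forall t, inJ a b t -> 0 < Zf t /\ Rf t^(2*m) + Zf t^(2*m) = 1 /\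
   Rf t^(2*m-1) = - Derive u t * Zf t^(2*m-1)).
{ intros t Ht. apply rz_explicit; auto. }
split.
- exists (fun t v => mk3 (Rf t * cos v) (Rf t * sin v) (Zf t)). intros s v Hs.
  destruct (HRZ s Hs) as [Hz [H1 H2]].
  apply bgm_pt_of; auto. destruct Hs; lra.
- intros eta HB s v Hs.
  pose proof (bgm_form m u a b eta Hm ha hu' HB) as Hform.
  assert (Hf : forall t, inJ a b t -> forall v, eta t v = mk3 (Rf t * cos v) (Rf t * sin v) (Zf t)).
  { intros t Ht w. destruct (Hform t Ht) as [E [Hz [H1 H2]]].
    destruct (HRZ t Ht) as [Hz' [H1' H2']].
    destruct (rz_uniq m (Derive u t) _ _ _ _ Hm Hz Hz' H1 H1' H2 H2') as [Q1 Q2].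
    rewrite (E w), Q1, Q2; reflexivity. }
  destruct (HRZ s Hs) as [Hz [H1 H2]].
  pose proof (Hrange s Hs) as Hw.
  pose proof (Rr_is_derive eps K c s ltac:(lra)) as DR.
  apply (curv_back u a b eta Rf Zf K m s v); auto.
  + destruct Hs; lra.
  + intros t Ht. apply HRZ; auto.
  + eexists; exact DR.
  + apply Zz_ex_derive; auto.
  + unfold Rf. rewrite (is_derive_unique _ _ _ DR). unfold Rr.
    assert (0 < sqrt (K*s^2+c)) by (apply sqrt_lt_R0; lra).
    destruct Heps; subst; field; lra.
Qed.

Theorem theorem5p1 (m : nat) (hm : (2 <= m)%nat) (K : R) (hK : K <> 0)
  (a : R) (b : Rbar) (ha : 0 <= a) (hab : Rbar_lt a b)
  (u : R -> R)
  (hsmooth : forall (n : nat) (x : R), inJ a b x -> ex_derive_n u n x)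
  (hu' : forall x, inJ a b x -> Derive u x <> 0) :
  ConstMinkGaussCurv m (rotSurf u) (fun alpha _ => inJ a b alpha) K <->
  exists c1 : R,
    (forall alpha, inJ a b alpha -> 0 < K * alpha ^ 2 + c1 < 1) /\
    exists eps : R, (eps = 1 \/ eps = -1) /\
      forall alpha, inJ a b alpha ->
        Derive u alpha =
          eps * Rpower (K * alpha ^ 2 + c1) ((2 * INR m - 1) / 2)
            / Rpower (1 - (K * alpha ^ 2 + c1) ^ m)
                     ((2 * INR m - 1) / (2 * INR m)).
Proof.
split.
- apply forward; auto.
- apply backward; auto.
Qed.
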